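(* Let $n\ge 8$ be an even integer and let $W_{3,n}$ be the $3$-regular Kn\''odel graph. Then $W_{3,n}$ is $\gamma$-critical if and only if $n\equiv 4 \pmod 8$.
   Context: For an even integer $n\ge 2$ and $1\le\Delta\le\lfloor\log_2 n\rfloor$, the Kn\''odel graph $W_{\Delta,n}$ is the $\Delta$-regular bipartite graph on the $n$ vertices $(i,j)$, $i\in\{1,2\}$, $0\le j\le n/2-1$, in which for every $j$ the vertex $(1,j)$ is adjacent to the vertices $(2,(j+2^k-1)\bmod (n/2))$ for $k=0,1,\dots,\Delta-1$ (and there are no other edges); in particular $W_{3,n}$ is defined for even $n\ge 8$. A set $D$ of vertices of a graph $G$ is dominating if every vertex not in $D$ is adjacent to a vertex of $D$; $\gamma(G)$ is the minimum size of a dominating set. A graph $G$ is $\gamma$-critical (domination vertex critical) if $\gamma(G-u)<\gamma(G)$ for every vertex $u$ of $G$, where $G-u$ is the graph obtained by deleting $u$. *)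

(* Defs.v *)
From mathcomp Require Import all_boot.
Set Implicit Arguments. Unset Strict Implicit. Unset Printing Implicit Defensive.

Definition dominating_on (T : finType) (adj : rel T) (V D : {set T}) : bool :=
  (D \subset V) && [forall v in V :\: D, [exists d in D, adj v d]].

(* Domination number of the graph induced on V (V itself is dominating,
   so the minimum is over a nonempty family; #|T| is just a neutral bound). *)
Definition gamma_on (T : finType) (adj : rel T) (V : {set T}) : nat :=
  \big[minn/#|T|]_(D : {set T} | dominating_on adj V D) #|D|.

Definition gamma (T : finType) (adj : rel T) : nat := gamma_on adj [set: T].

Definition gamma_del (T : finType) (adj : rel T) (u : T) : nat :=
  gamma_on adj [set~ u].

Definition gamma_critical (T : finType) (adj : rel T) : Prop :=
  forall u : T, gamma_del adj u < gamma adj.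

(* Knödel graph W_{Δ,n}: vertices (i,j), i ∈ {1,2} (encoded false = 1,
   true = 2), j ∈ 'I_(n/2).  (1,j) ~ (2,(j + 2^k - 1) mod (n/2)) for k < Δ. *)
Definition knodel_vertex (n : nat) : finType := (bool * 'I_(n./2))%type.

Definition knodel_arc (Delta n : nat) (j j' : nat) : bool :=
  [exists k : 'I_Delta, j' == (j + 2 ^ k - 1) %% n./2].

Definition knodel_adj (Delta n : nat) : rel (knodel_vertex n) :=
  fun x y =>
    match x, y with
    | (false, j), (true, j') => knodel_arc Delta n j j'
    | (true, j'), (false, j) => knodel_arc Delta n j j'
    | _, _ => false
    end.
Arguments knodel_adj Delta n : clear implicits.

(* Main.v *)
Require Import Defs.
From mathcomp Require Import all_boot zify.
Set Implicit Arguments. Unset Strict Implicit. Unset Printing Implicit Defensive.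

Lemma gamma_on_le (T : finType) (adj : rel T) (V D : {set T}) :
  dominating_on adj V D -> gamma_on adj V <= #|D|.
Proof.
move=> HD; rewrite /gamma_on; have := mem_index_enum D.
elim: (index_enum _) => [|x r IH] //=; rewrite big_cons inE.
case/orP => [/eqP <-|/IH h]; first by rewrite HD geq_minl.
case: ifP => _ //; exact: leq_trans (geq_minr _ _) h.
Qed.

Lemma gamma_on_ge (T : finType) (adj : rel T) (V : {set T}) (L : nat) :
  L <= #|T| -> (forall D, dominating_on adj V D -> L <= #|D|) -> L <= gamma_on adj V.
Proof.
move=> HT HD; rewrite /gamma_on; apply: (big_ind (fun x => L <= x)) => //.
  by move=> x y hx hy; rewrite leq_min hx hy.
Qed.

Lemma arc3E n j j' : knodel_arc 3 n j j' =
  [|| j' == (j + 0) %% n./2, j' == (j + 1) %% n./2 | j' == (j + 3) %% n./2].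
Proof.
rewrite /knodel_arc; apply/existsP/idP.
- case=> [[[|[|[|k]]] Hk]] //= /eqP ->.
  + by rewrite expn0 addnK addn0 eqxx.
  + by rewrite expn1 (addnBA j (isT : 1 <= 2)) eqxx orbT.
  + by rewrite (addnBA j (isT : 1 <= 2 ^ 2)) eqxx !orbT.
- case/or3P => /eqP ->.
  + by exists (Ordinal (isT : 0 < 3)); rewrite /= expn0 addnK addn0.
  + by exists (Ordinal (isT : 1 < 3)); rewrite /= expn1 (addnBA j (isT : 1 <= 2)).
  + by exists (Ordinal (isT : 2 < 3)); rewrite /= (addnBA j (isT : 1 <= 2 ^ 2)).
Qed.

Lemma modn_if m x : x < m + m -> x %% m = if x < m then x else x - m.
Proof.
move=> h; case: ifP => h1; first by rewrite modn_small.
have e : x = (x - m) + m by rewrite subnK // leqNgt h1.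
by rewrite {1}e modnDr modn_small //; lia.
Qed.

Lemma card_le_seq n (A : {set knodel_vertex n}) (s : seq (bool * nat)) :
  (forall x, x \in A -> (x.1, val x.2) \in s) -> #|A| <= size s.
Proof.
move=> H; rewrite cardE -(size_map (fun x : knodel_vertex n => (x.1, val x.2))).
apply: uniq_leq_size.
  rewrite map_inj_uniq ?enum_uniq //.
  by move=> [b j] [b' j'] /= [-> /val_inj ->].
by move=> y /mapP [x]; rewrite mem_enum => /H Hx ->.
Qed.

Definition side n (b : bool) : {set knodel_vertex n} := [set x | x.1 == b].
Definition nbr n (d : knodel_vertex n) : {set knodel_vertex n} :=
  [set x | knodel_adj 3 n x d].
Arguments nbr n d : clear implicits.

Lemma modinv m c j : c <= m -> j < m -> ((j + c) %% m + (m - c)) %% m = j.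
Proof. by move=> hc hj; rewrite modnDml -addnA subnKC // modnDr modn_small. Qed.

Lemma nbr_card n d : 4 <= n./2 -> #|nbr n d| <= 3.
Proof.
move=> m4; case: d => [[] j'].
- apply: (@card_le_seq n _ [:: (false, (j' + (n./2 - 0)) %% n./2);
     (false, (j' + (n./2 - 1)) %% n./2); (false, (j' + (n./2 - 3)) %% n./2)]).
  move=> [[] j]; rewrite inE //= arc3E.
  have hj := ltn_ord j.
  case/or3P => /eqP ->; rewrite !inE modinv ?eqxx ?orbT //; lia.
- apply: (@card_le_seq n _ [:: (true, (j' + 0) %% n./2);
     (true, (j' + 1) %% n./2); (true, (j' + 3) %% n./2)]).
  move=> [[] j]; rewrite inE //= arc3E.
  by case/or3P => /eqP ->; rewrite !inE eqxx ?orbT.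
Qed.

Lemma card_bigcup_le (T I : finType) (A : {pred I}) (F : I -> {set T}) :
  #|\bigcup_(i in A) F i| <= \sum_(i in A) #|F i|.
Proof.
apply: (big_ind2 (fun (X : {set T}) (k : nat) => #|X| <= k)) => //.
- by rewrite cards0.
- move=> X1 k1 X2 k2 h1 h2; apply: leq_trans (leq_card_setU _ _) _.
  exact: leq_add.
Qed.

Lemma side_bound n (V D : {set knodel_vertex n}) b : 4 <= n./2 ->
  dominating_on (knodel_adj 3 n) V D ->
  #|V :&: side n b| <= #|D :&: side n b| + 3 * #|D :&: side n (~~ b)|.
Proof.
move=> m4 /andP [_ /forall_inP Hd].
have sub : V :&: side n b \subset
   (D :&: side n b) :|: \bigcup_(d in D :&: side n (~~ b)) nbr n d.
  apply/subsetP => x /setIP [xV xs].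
  case xD: (x \in D); first by rewrite in_setU in_setI xD xs.
  have /existsP [d /andP [dD adj]] : [exists d in D, knodel_adj 3 n x d].
    by apply: Hd; rewrite !inE xD xV.
  apply/setUP; right; apply/bigcupP; exists d; last by rewrite inE.
  rewrite !inE dD /=; move: xs adj; rewrite inE; clear xV xD dD.
  by case: x => [[] j]; case: d => [[] j'] //= /eqP <-.
apply: leq_trans (subset_leq_card sub) _.
apply: leq_trans (leq_card_setU _ _) _; rewrite leq_add2l.
apply: leq_trans (card_bigcup_le _ _) _.
rewrite mulnC -sum_nat_const; apply: leq_sum => d _; exact: nbr_card.
Qed.

Lemma split_card n (A : {set knodel_vertex n}) :
  #|A| = #|A :&: side n false| + #|A :&: side n true|.
Proof.
rewrite -(cardsID (side n false) A).
have -> : A :\: side n false = A :&: side n true.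
  by apply/setP => x; rewrite !inE; case: x => [[] j] /=; rewrite ?andbT ?andbF.
by [].
Qed.

Lemma card_side n b : #|side n b| = n./2.
Proof.
have -> : side n b = [set (b, j) | j : 'I_(n./2)].
  apply/setP => -[b' j]; rewrite !inE; apply/eqP/imsetP => [<-|[j' _ [-> _]]] //.
  by exists j.
by rewrite card_imset ?cardsT ?card_ord // => x y [].
Qed.

Lemma card_vertex n : #|knodel_vertex n| = 2 * n./2.
Proof. by rewrite /knodel_vertex card_prod card_bool card_ord. Qed.

Lemma dom_image (T : finType) (adj : rel T) (f : T -> T) (u : T) (D : {set T}) :
  forall finj : injective f, (forall x y, adj x y -> adj (f x) (f y)) ->
  dominating_on adj [set~ u] D -> dominating_on adj [set~ f u] (f @: D).
Proof.
move=> finj fadj /andP [sub /forall_inP Hd]; apply/andP; split.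
  apply/subsetP => y /imsetP [x xD ->]; rewrite in_setC1 (inj_eq finj).
  by move/subsetP: sub => /(_ x xD); rewrite in_setC1.
apply/forall_inP => v /setDP [vu vD].
pose w := invF finj v; have fw : f w = v := f_invF finj v.
have : w \in [set~ u] :\: D.
  rewrite !inE; apply/andP; split.
  - by apply: contra vD => wD; rewrite -fw; exact: imset_f.
  - by move: vu; rewrite in_setC1 -fw (inj_eq finj).
move/Hd => /existsP [d /andP [dD ad]].
apply/existsP; exists (f d); rewrite imset_f //= -fw; exact: fadj.
Qed.

Definition rotv n (m0 : 0 < n./2) (k : nat) (x : knodel_vertex n) : knodel_vertex n :=
  (x.1, Ordinal (ltn_pmod (val x.2 + k) m0)).

Lemma rotv_inj n (m0 : 0 < n./2) k : injective (rotv m0 k).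
Proof.
move=> [b j] [b' j'] [-> e]; congr pair; apply: val_inj => /=.
by move/eqP: e; rewrite eqn_modDr !modn_small // => /eqP.
Qed.

Lemma rotv_adj n (m0 : 0 < n./2) k x y :
  knodel_adj 3 n x y -> knodel_adj 3 n (rotv m0 k x) (rotv m0 k y).
Proof.
case: x y => [[] j] [[] j'] //=; rewrite !arc3E;
  by case/or3P => /eqP ->; rewrite !modnDml addnAC eqxx ?orbT.
Qed.

Lemma dom_pred n (P : bool -> nat -> bool) (V : {set knodel_vertex n}) :
  3 <= n./2 ->
  (forall x : knodel_vertex n, P x.1 (val x.2) -> x \in V) ->
  (forall j : 'I_(n./2), (false, j) \in V -> [|| P false j, P true j,
      P true (if j + 1 < n./2 then j + 1 else j + 1 - n./2) |
      P true (if j + 3 < n./2 then j + 3 else j + 3 - n./2)]) ->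
  (forall j : 'I_(n./2), (true, j) \in V -> [|| P true j, P false j,
      P false (if 1 <= j then j - 1 else j + n./2 - 1) |
      P false (if 3 <= j then j - 3 else j + n./2 - 3)]) ->
  dominating_on (knodel_adj 3 n) V [set x | P x.1 (val x.2)].
Proof.
move=> m3 HV H0 H1; apply/andP; split.
  by apply/subsetP => x; rewrite inE; exact: HV.
apply/forall_inP => -[b j] /setDP [Hv Hnd]; rewrite inE /= in Hnd.
have hj := ltn_ord j.
have Hex : forall (b' : bool) (j' : nat) (h : j' < n./2), P b' j' ->
    knodel_adj 3 n (b, j) (b', Ordinal h) ->
    [exists d in [set x | P x.1 (val x.2)], knodel_adj 3 n (b, j) d].
  move=> b' j' h hp ha; apply/existsP; exists (b', Ordinal h).
  by rewrite inE hp ha.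
case: b Hv Hnd Hex => Hv Hnd Hex.
- move: (H1 j Hv); rewrite (negbTE Hnd) /= => /or3P [hp|hp|hp].
  + apply: (Hex false j (ltn_ord j) hp).
    by rewrite /= arc3E addn0 modn_small ?eqxx.
  + have h : (if 1 <= j then j - 1 else j + n./2 - 1) < n./2 by case: ifP; lia.
    apply: (Hex false _ h hp); rewrite /= arc3E.
    rewrite [X in _ || ((_ == X) || _)]modn_if; last by case: ifP; lia.
    by case: ifP => h1; case: ifP => h2; lia.
  + have h : (if 3 <= j then j - 3 else j + n./2 - 3) < n./2 by case: ifP; lia.
    apply: (Hex false _ h hp); rewrite /= arc3E.
    rewrite [X in _ || (_ || (_ == X))]modn_if; last by case: ifP; lia.
    by case: ifP => h1; case: ifP => h2; lia.
- move: (H0 j Hv); rewrite (negbTE Hnd) /= => /or3P [hp|hp|hp].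
  + apply: (Hex true j (ltn_ord j) hp).
    by rewrite /= arc3E addn0 modn_small ?eqxx.
  + have h : (if j + 1 < n./2 then j + 1 else j + 1 - n./2) < n./2 by case: ifP; lia.
    apply: (Hex true _ h hp); rewrite /= arc3E.
    rewrite [X in _ || ((_ == X) || _)]modn_if; last by lia.
    by case: ifP => h1; lia.
  + have h : (if j + 3 < n./2 then j + 3 else j + 3 - n./2) < n./2 by case: ifP; lia.
    apply: (Hex true _ h hp); rewrite /= arc3E.
    rewrite [X in _ || (_ || (_ == X))]modn_if; last by lia.
    by case: ifP => h1; lia.
Qed.

Definition bP (t : nat) (e0 e1 : seq nat) (b : bool) (j : nat) : bool :=
  ((j < 4 * t) && (j %% 4 == (if b then 2 else 0))) || (j \in (if b then e1 else e0)).

Lemma card_bP n t e0 e1 :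
  #|[set x : knodel_vertex n | bP t e0 e1 x.1 (val x.2)]| <= 2 * t + size e0 + size e1.
Proof.
set s := ([seq (false, 4 * i) | i <- iota 0 t] ++
   [seq (true, 4 * i + 2) | i <- iota 0 t] ++ [seq (false, x) | x <- e0] ++
   [seq (true, x) | x <- e1]).
have H : forall x : knodel_vertex n, x \in [set x : knodel_vertex n | bP t e0 e1 x.1 (val x.2)] ->
   (x.1, val x.2) \in s.
  move=> [b [j hj]]; rewrite inE /bP /= => /orP [/andP [h1 h2] | h]; rewrite !mem_cat.
  - case: b h2 => /= /eqP h2.
    + have -> : (true, j) = (true, 4 * (j %/ 4) + 2) by congr pair; lia.
      by rewrite (map_f (fun i => (true, 4 * i + 2))) ?orbT // mem_iota; lia.
    + have -> : (false, j) = (false, 4 * (j %/ 4)) by congr pair; lia.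
      by rewrite (map_f (fun i => (false, 4 * i))) ?orbT // mem_iota; lia.
  - case: b h => h /=.
    + by rewrite (map_f (fun x => (true, x))) ?orbT.
    + by rewrite (map_f (fun x => (false, x))) ?orbT.
apply: leq_trans (card_le_seq H) _.
by rewrite /s !size_cat !size_map size_iota; lia.
Qed.

Ltac arith := rewrite /bP ?inE /=; repeat case: ifP; lia.

Theorem theorem3p1 (n : nat) :
  ~~ odd n -> 8 <= n ->
  (gamma_critical (knodel_adj 3 n) <-> n = 4 %[mod 8]).
Proof.
move=> Hodd H8.
have e : n./2 * 2 = n.
  by have := odd_double_half n; rewrite (negbTE Hodd) add0n -muln2.
have m4 : 4 <= n./2 by lia.
have m3 : 3 <= n./2 by lia.
have m0 : 0 < n./2 by lia.
have LBdel : forall u D, dominating_on (knodel_adj 3 n) [set~ u] D -> n - 1 <= 4 * #|D|.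
  move=> u D HD; have h0 := side_bound false m4 HD; have h1 := side_bound true m4 HD.
  have := split_card [set~ u]; rewrite cardsC1 card_vertex => e1.
  have e2 := split_card D; simpl in h0, h1.
  move: h0 h1 e1 e2. set a := #|D :&: side n false|. set b := #|D :&: side n true|. set c := #|[set~ u] :&: side n false|. set d := #|[set~ u] :&: side n true|. lia.
have [t [r [ht hr]]] : exists t r, n./2 = 4 * t + r /\ r < 4.
  by exists (n./2 %/ 4), (n./2 %% 4); split; lia.
split.
- move=> Hc.
  pose u : knodel_vertex n := (false, Ordinal m0).
  have key : r = 2 \/ exists D, dominating_on (knodel_adj 3 n) [set: knodel_vertex n] D /\ 4 * #|D| <= n + 2.
    case: r hr ht => [|[|[|[|r]]]] // _ ht; [right|right|by left|right].
    + exists [set x : knodel_vertex n | bP t [::] [::] x.1 (val x.2)]; split.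
        apply: dom_pred => //; move=> j _; have := ltn_ord j; arith.
      have := card_bP n t [::] [::]; simpl; lia.
    + exists [set x : knodel_vertex n | bP t [::] [:: 4 * t] x.1 (val x.2)]; split.
        apply: dom_pred => //; move=> j _; have := ltn_ord j; arith.
      have := card_bP n t [::] [:: 4 * t]; simpl; lia.
    + exists [set x : knodel_vertex n | bP t [:: 4 * t + 1] [:: 4 * t] x.1 (val x.2)]; split.
        apply: dom_pred => //; move=> j _; have := ltn_ord j; arith.
      have := card_bP n t [:: 4 * t + 1] [:: 4 * t]; simpl; lia.
  case: key => [hr2|[D0 [HD0 hD0]]]; first by lia.
  have := Hc u; rewrite /gamma_del /gamma.
  have g1 := gamma_on_le HD0.
  have g2 : #|D0| <= gamma_on (knodel_adj 3 n) [set~ u].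
    apply: gamma_on_ge; first exact: max_card.
    move=> D HD; have := LBdel u D HD; lia.
  lia.
- move=> hmod.
  have hr2 : r = 2 by lia.
  have t1 : 1 <= t by lia.
  have G : 2 * t + 2 <= gamma (knodel_adj 3 n).
    apply: gamma_on_ge; first by rewrite card_vertex; lia.
    move=> D HD; have h0 := side_bound false m4 HD; have h1 := side_bound true m4 HD.
    rewrite setTI card_side in h0; rewrite setTI card_side in h1.
    have e2 := split_card D; simpl in h0, h1.
    move: h0 h1 e2. set a := #|D :&: side n false|. set b := #|D :&: side n true|. lia.
  move=> [b j]; apply: (@leq_ltn_trans (2 * t + 1)); last by lia.
  rewrite /gamma_del.
  case: b.
  + have h : 4 * t + 1 < n./2 by lia.
    pose u0 : knodel_vertex n := (true, Ordinal h).
    have HD0 : dominating_on (knodel_adj 3 n) [set~ u0]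
        [set x : knodel_vertex n | bP t [::] [:: 4 * t] x.1 (val x.2)].
      apply: dom_pred => //.
      * move=> [b' j'] hp; rewrite in_setC1; apply: contraTneq hp => -[-> ->] /=.
        rewrite /bP !inE /=; lia.
      * move=> j' _; have := ltn_ord j'; arith.
      * move=> j' Hv.
        have hv : (nat_of_ord j') != 4 * t + 1.
          rewrite in_setC1 in Hv; apply: contra Hv => /eqP ev; apply/eqP.
          by congr pair; apply: val_inj.
        move: hv; have := ltn_ord j'; arith.
    have := dom_image (@rotv_inj n m0 (j + 1)) (@rotv_adj n m0 (j + 1)) HD0.
    have -> : rotv m0 (j + 1) u0 = (true, j).
      congr pair; apply: val_inj => /=.
      have -> : 4 * t + 1 + (j + 1) = j + n./2 by lia.
      by rewrite modnDr modn_small.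
    move=> HD; apply: leq_trans (gamma_on_le HD) _.
    apply: leq_trans (leq_imset_card _ _) _.
    have := card_bP n t [::] [:: 4 * t]; simpl; lia.
  + have h : 4 * t - 1 < n./2 by lia.
    pose u0 : knodel_vertex n := (false, Ordinal h).
    have HD0 : dominating_on (knodel_adj 3 n) [set~ u0]
        [set x : knodel_vertex n | bP t [:: 4 * t] [::] x.1 (val x.2)].
      apply: dom_pred => //.
      * move=> [b' j'] hp; rewrite in_setC1; apply: contraTneq hp => -[-> ->] /=.
        rewrite /bP !inE /=; lia.
      * move=> j' Hv.
        have hv : (nat_of_ord j') != 4 * t - 1.
          rewrite in_setC1 in Hv; apply: contra Hv => /eqP ev; apply/eqP.
          by congr pair; apply: val_inj.
        move: hv; have := ltn_ord j'; arith.
      * move=> j' _; have := ltn_ord j'; arith.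
    have := dom_image (@rotv_inj n m0 (j + 3)) (@rotv_adj n m0 (j + 3)) HD0.
    have -> : rotv m0 (j + 3) u0 = (false, j).
      congr pair; apply: val_inj => /=.
      have -> : 4 * t - 1 + (j + 3) = j + n./2 by lia.
      by rewrite modnDr modn_small.
    move=> HD; apply: leq_trans (gamma_on_le HD) _.
    apply: leq_trans (leq_imset_card _ _) _.
    have := card_bP n t [:: 4 * t] [::]; simpl; lia.
Qed.
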